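(* Let $m,n$ be positive integers. Then $\mathrm{RR}(\mathcal{B}_m:\mathcal{B}_n)\leq m\,\mathrm{R}_{2^m-1}(\mathcal{B}_n)+m$.
   Context: $\mathcal{B}_N$ denotes the Boolean lattice of all subsets of $[N]$ ordered by inclusion. An induced copy of a poset $\mathcal{P}$ in a poset $\mathcal{Q}$ is the image of an injection $f:\mathcal{P}\to\mathcal{Q}$ with $f(X)\le f(Y)$ iff $X\le Y$. A colored family is monochromatic if all its sets share a color, rainbow if all its sets have pairwise distinct colors. $\mathrm{R}_k(\mathcal{P})$ is the smallest $n$ such that every coloring of $\mathcal{B}_n$ with $k$ colors contains a monochromatic induced copy of $\mathcal{P}$. The Boolean rainbow Ramsey number $\mathrm{RR}(\mathcal{Q}:\mathcal{P})$ is the smallest $n$ such that every coloring (with any number of colors) of the sets of $\mathcal{B}_n$ contains a rainbow induced copy of $\mathcal{Q}$ or a monochromatic induced copy of $\mathcal{P}$. *)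

(* Defs.v *)
From mathcomp Require Import all_boot.
Set Implicit Arguments. Unset Strict Implicit. Unset Printing Implicit Defensive.

(* The Boolean lattice B_N is {set 'I_N} ordered by \subset. *)

Definition induced_copy (m N : nat) (f : {set 'I_m} -> {set 'I_N}) : Prop :=
  injective f /\ forall X Y : {set 'I_m}, (f X \subset f Y) = (X \subset Y).

Definition mono_copy (C : Type) (n N : nat) (c : {set 'I_N} -> C) : Prop :=
  exists f : {set 'I_n} -> {set 'I_N},
    induced_copy f /\ forall X Y : {set 'I_n}, c (f X) = c (f Y).

Definition rainbow_copy (C : Type) (m N : nat) (c : {set 'I_N} -> C) : Prop :=
  exists f : {set 'I_m} -> {set 'I_N},
    induced_copy f /\ injective (fun X => c (f X)).

Definition ramsey_prop (k n N : nat) : Prop :=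
  forall c : {set 'I_N} -> 'I_k, @mono_copy _ n N c.

Definition rainbow_ramsey_prop (m n N : nat) : Prop :=
  forall (C : Type) (c : {set 'I_N} -> C), @rainbow_copy C m N c \/ @mono_copy C n N c.

Definition is_least (P : nat -> Prop) (N : nat) : Prop :=
  P N /\ forall N', P N' -> N <= N'.

(* Main.v *)
Require Import Defs.
From mathcomp Require Import all_boot.
From mathcomp Require Import zify.
From Stdlib Require Import Classical.
Set Implicit Arguments. Unset Strict Implicit. Unset Printing Implicit Defensive.

Definition memS (R : nat) (S : {set 'I_R}) (a : nat) : bool :=
  [exists j in S, val j == a].

Definition Aset (m R : nat) (I : {set 'I_m}) (S : {set 'I_R}) : {set 'I_(m*R+m)} :=
  [set i : 'I_(m*R+m) | if (i < m*R)%N then (i %/ R < #|I|) || ((i %/ R == #|I|) && memS S (i %% R))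
                        else [exists a in I, val a == i - m*R]].

Lemma memS_val R (S : {set 'I_R}) (j : 'I_R) : memS S j = (j \in S).
Proof.
apply/existsP/idP => [[k /andP [kS /eqP e]]|jS]; last by exists j; rewrite jS eqxx.
by have <- : k = j by apply: val_inj.
Qed.

Lemma memS_sub R (S S' : {set 'I_R}) a : S \subset S' -> memS S a -> memS S' a.
Proof.
move=> sub /existsP [j /andP [jS e]]; apply/existsP; exists j.
by rewrite (subsetP sub _ jS) e.
Qed.

Lemma Aset_S_induced m R (I : {set 'I_m}) : I != setT ->
  induced_copy (fun S : {set 'I_R} => Aset I S).
Proof.
move=> nT.
have kI : #|I| < m.
  by rewrite -[X in _ < X]card_ord -cardsT; apply: proper_card; rewrite properT.
have key : forall S S' : {set 'I_R}, (Aset I S \subset Aset I S') = (S \subset S').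
  move=> S S'; apply/idP/idP => sub.
  - apply/subsetP => j jS.
    have lt : #|I| * R + j < m * R + m by have := ltn_ord j; nia.
    have lt2 : #|I| * R + j < m * R by have := ltn_ord j; nia.
    have R0 : 0 < R by have := ltn_ord j; lia.
    have dv : (#|I| * R + j) %/ R = #|I| by rewrite divnMDl // divn_small // addn0.
    have md : (#|I| * R + j) %% R = j by rewrite modnMDl modn_small.
    have : Ordinal lt \in Aset I S by rewrite inE /= lt2 dv md ltnn eqxx memS_val.
    by move/(subsetP sub); rewrite inE /= lt2 dv md ltnn eqxx memS_val.
  - apply/subsetP => i; rewrite !inE; case: ifP => // _.
    case/orP => [->//|/andP [-> h]]; by rewrite (memS_sub sub h) orbT.
split; last exact: key.
move=> S S' e; apply/eqP; rewrite eqEsubset -!key e; by rewrite subxx.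
Qed.

Lemma Aset_I m R (s : {set 'I_m} -> {set 'I_R}) (I J : {set 'I_m}) :
  (Aset I (s I) \subset Aset J (s J)) = (I \subset J).
Proof.
apply/idP/idP => sub.
- apply/subsetP => a aI.
  have lt : m * R + a < m * R + m by rewrite ltn_add2l.
  have ge : (m * R + a < m * R) = false by rewrite ltnNge leq_addr.
  have : Ordinal lt \in Aset I (s I).
    by rewrite inE /= ge addKn; apply/existsP; exists a; rewrite aI eqxx.
  move/(subsetP sub); rewrite inE /= ge addKn => /existsP [b /andP [bJ /eqP e]].
  by have <- : b = a by apply: val_inj.
- case: (eqVneq I J) => [->|ne]; first exact: subxx.
  have lt : #|I| < #|J| by apply: proper_card; rewrite properEneq ne sub.
  apply/subsetP => i; rewrite !inE; case: ifP => _.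
  + case/orP => [h|/andP [/eqP e _]]; apply/orP; left; first exact: ltn_trans h lt.
    by rewrite e.
  + case/existsP => a /andP [aI e]; apply/existsP; exists a.
    by rewrite (subsetP sub _ aI) e.
Qed.

Lemma Aset_I_induced m R (s : {set 'I_m} -> {set 'I_R}) :
  induced_copy (fun I => Aset I (s I)).
Proof.
split; last by move=> X Y; rewrite Aset_I.
move=> X Y e; apply/eqP; rewrite eqEsubset -(Aset_I s X Y) -(Aset_I s Y X) e.
by rewrite subxx.
Qed.

Lemma induced_comp a b d (f : {set 'I_a} -> {set 'I_b}) (g : {set 'I_b} -> {set 'I_d}) :
  induced_copy f -> induced_copy g -> induced_copy (fun X => g (f X)).
Proof.
move=> [fi fs] [gi gs]; split; first by move=> X Y e; apply: fi; apply: gi.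
by move=> X Y; rewrite gs fs.
Qed.

Lemma choose_sel m n R (C : Type) (c : {set 'I_(m*R+m)} -> C)
  (hR : ramsey_prop (2^m - 1) n R) (nm : ~ mono_copy n c) :
  forall k (F : {set {set 'I_m}}), #|F| = k -> setT \notin F ->
  exists s : {set 'I_m} -> {set 'I_R},
    {in setT |: F &, injective (fun I => c (Aset I (s I)))}.
Proof.
elim => [|k IH] F cF nT.
  exists (fun _ => set0) => J1 J2.
  by rewrite (cards0_eq cF) setU0 !inE => /eqP -> /eqP ->.
have [I IF] : exists I, I \in F by apply/set0Pn; rewrite -card_gt0 cF.
have cF' : #|F :\ I| = k by move: cF; rewrite (cardsD1 I F) IF add1n => -[].
have nT' : setT \notin F :\ I by rewrite !inE negb_and nT orbT.
have [s' inj'] := IH _ cF' nT'.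
set D := setT |: (F :\ I).
have INT : I != setT by apply/eqP => e; move: nT; rewrite -e IF.
have ID : I \notin D by rewrite !inE eqxx /= orbF.
have TD : setT \in D by rewrite !inE eqxx.
case: (classic (forall S, exists J, J \in D /\ c (Aset I S) = c (Aset J (s' J)))) => [all|nall].
  exfalso; apply: nm.
  have : forall S, exists j : 'I_#|D|,
      c (Aset I S) = c (Aset (enum_val j) (s' (enum_val j))).
    move=> S; have [J [JD e]] := all S; exists (enum_rank_in TD J).
    by rewrite enum_rankK_in.
  case/fin_all_exists => f hf.
  have le : #|D| <= 2^m - 1.
    have : #|D| < #|[set: {set 'I_m}]|.
      apply: proper_card; rewrite properT; apply/eqP => e; move: ID; by rewrite e inE.
    by rewrite -powersetT card_powerset cardsT card_ord; lia.
  have [h [hind hc]] := hR (fun S => widen_ord le (f S)).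
  exists (fun X => Aset I (h X)); split; first exact: induced_comp hind (Aset_S_induced R INT).
  move=> X Y; rewrite hf (hf (h Y)).
  have -> : f (h X) = f (h Y) by apply: val_inj; exact: (congr1 val (hc X Y)).
  by [].
have [S hS] : exists S, forall J, J \in D -> c (Aset I S) <> c (Aset J (s' J)).
  apply: NNPP => ne; apply: nall => S; apply: NNPP => ne2; apply: ne; exists S => J JD e.
  by apply: ne2; exists J.
exists (fun J => if J == I then S else s' J).
have memD : forall J, J \in setT |: F -> J != I -> J \in D.
  move=> J; rewrite !inE; case/orP => [->//|JF] ne; by rewrite ne JF orbT.
move=> J1 J2 J1in J2in /=.
case: (eqVneq J1 I) => [->|n1]; case: (eqVneq J2 I) => [->|n2] //.
- by move=> e; exfalso; exact: (hS J2 (memD _ J2in n2) e).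
- by move=> e; exfalso; exact: (hS J1 (memD _ J1in n1) (esym e)).
- by move=> e; apply: inj' => //; apply: memD.
Qed.

Theorem theorem1p5 (m n : nat) (hm : 0 < m) (hn : 0 < n) (R0 : nat)
  (hR0 : is_least (ramsey_prop (2 ^ m - 1) n) R0) :
  exists N, is_least (rainbow_ramsey_prop m n) N /\ N <= m * R0 + m.
Proof.
case: hR0 => hR _.
have PN : rainbow_ramsey_prop m n (m * R0 + m).
  move=> C c; case: (classic (mono_copy n c)) => [h|nm]; [by right|left].
  have nT : setT \notin ~: [set (setT : {set 'I_m})] by rewrite !inE eqxx.
  have [s inj] := choose_sel hR nm (erefl _) nT.
  exists (fun I => Aset I (s I)); split; first exact: Aset_I_induced.
  move=> X Y e; apply: inj => //; by rewrite !inE orbN.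
have main : forall k, rainbow_ramsey_prop m n k ->
    exists N, is_least (rainbow_ramsey_prop m n) N /\ N <= k.
  elim/ltn_ind => k IH Pk.
  case: (classic (exists k', k' < k /\ rainbow_ramsey_prop m n k')) => [[k' [lt Pk']]|none].
    have [N [l le]] := IH k' lt Pk'.
    by exists N; split => //; exact: leq_trans le (ltnW lt).
  exists k; split => //; split => // N' PN'; rewrite leqNgt; apply/negP => lt.
  by apply: none; exists N'.
exact: main _ PN.
Qed.
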